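(* Let $b\in L^m_{\mathrm{loc}}(\mathbb{R}^n)$, let $\mathcal{S}$ be a sparse family, $m$ a positive integer, $h\in\{0,\dots,m\}$, and $A$ a Young function. Then for every $x$, $$\mathcal{A}_{A,\mathcal{S}}^{m-h}(b,f)(x)\leq \sum_{Q\in \mathcal{S}} |b(x)-b_Q|^m \|f\|_{A,Q}\, \chi_Q(x) + \sum_{Q\in \mathcal{S}} \big\|f|b-b_Q|^m\big\|_{A,Q}\, \chi_Q(x),$$ where $\mathcal{A}_{A,\mathcal{S}}^{m-h}(b,f)(x)=\sum_{Q\in\mathcal{S}}|b(x)-b_Q|^{m-h}\,\big\|f|b-b_Q|^h\big\|_{A,Q}\chi_Q(x)$.
   Context: In $\mathbb{R}^n$; $b_Q=\frac1{|Q|}\int_Qb$; for a Young function $A$, $\|g\|_{A,Q}=\inf\{\lambda>0:\frac1{|Q|}\int_QA(|g|/\lambda)\le1\}$. A sparse family: cubes $Q$ with pairwise disjoint $E_Q\subset Q$, $|E_Q|\ge\eta|Q|$. *)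

(* Defs.v *)
From HB Require Import structures.
From mathcomp Require Import all_boot all_order all_algebra.
From mathcomp Require Import all_classical all_reals all_analysis.
Set Implicit Arguments. Unset Strict Implicit. Unset Printing Implicit Defensive.
Import Order.TTheory GRing.Theory Num.Theory.
Import numFieldNormedType.Exports.
Local Open Scope classical_set_scope.
Local Open Scope ring_scope.

Section defs.
Context {R : realType} {n : nat}.

Notation pt := (n.-tuple R).

Definition box (a b : pt) : set pt :=
  [set x | forall i : 'I_n, tnth a i <= tnth x i < tnth b i].

(* mu is Lebesgue measure on R^n: it gives each box its volume.
   (This determines mu uniquely on the Borel sigma-algebra of R^n.) *)
Definition lebesgue_on_boxes (mu : {measure set pt -> \bar R}) : Prop :=
  forall a b : pt, (forall i, tnth a i <= tnth b i) ->
    mu (box a b) = (\prod_(i < n) (tnth b i - tnth a i))%:E.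

Definition is_cube (Q : set pt) : Prop :=
  exists (a : pt) (l : R), 0 < l /\
    Q = [set x | forall i : 'I_n, tnth a i <= tnth x i < tnth a i + l].

Definition avg (mu : {measure set pt -> \bar R}) (Q : set pt) (b : pt -> R) : R :=
  (fine (mu Q))^-1 * fine (\int[mu]_(y in Q) (b y)%:E).

(* b in L^m_loc: measurable and |b|^m integrable on every cube
   (equivalently on every compact set) *)
Definition Lloc (mu : {measure set pt -> \bar R}) (m : nat) (b : pt -> R) : Prop :=
  measurable_fun setT b /\
  forall Q, is_cube Q -> (\int[mu]_(y in Q) (`|b y| ^+ m)%:E < +oo)%E.

Definition sparse (mu : {measure set pt -> \bar R}) (eta : R) (S : set (set pt)) : Prop :=
  0 < eta /\ (forall Q, S Q -> is_cube Q) /\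
  exists E : set pt -> set pt,
    (forall Q, S Q -> measurable (E Q) /\ E Q `<=` Q /\ ((eta%:E * mu Q) <= mu (E Q))%E) /\
    (forall Q Q', S Q -> S Q' -> Q <> Q' -> E Q `&` E Q' = set0).

End defs.

Definition young {R : realType} (A : R -> R) : Prop :=
  A 0 = 0 /\
  (forall t, 0 <= t -> 0 <= A t) /\
  {within `[0, +oo[, continuous A} /\
  (forall s t, 0 <= s -> s <= t -> A s <= A t) /\
  (forall s t (l : R), 0 <= s -> 0 <= t -> 0 <= l -> l <= 1 ->
     A (l * s + (1 - l) * t) <= l * A s + (1 - l) * A t) /\
  (A t @[t --> +oo] --> +oo).

(* Luxemburg average ||g||_{A,Q} = inf {l > 0 : (1/|Q|) \int_Q A(|g|/l) <= 1}
   (= +oo if the set is empty). *)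
Definition lux {R : realType} {n : nat} (mu : {measure set (n.-tuple R) -> \bar R})
  (A : R -> R) (Q : set (n.-tuple R)) (g : n.-tuple R -> R) : \bar R :=
  ereal_inf [set (l%:E)%E | l in
    [set l : R | 0 < l /\
      (((fine (mu Q))^-1)%:E * \int[mu]_(y in Q) (A (`|g y| / l))%:E <= 1)%E]].

(* Main.v *)
Require Import Defs.
From HB Require Import structures.
From mathcomp Require Import all_boot all_order all_algebra.
From mathcomp Require Import all_classical all_reals all_analysis.
From mathcomp Require Import ring lra.
Import Order.TTheory GRing.Theory Num.Theory.
Local Open Scope classical_set_scope.
Local Open Scope ring_scope.

Section aux.
Context {R : realType} {n : nat}.

Lemma cube_measurable (Q : set (n.-tuple R)) : is_cube Q -> measurable Q.
Proof.
move=> [a [l [l0 ->]]].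
have -> : [set x : n.-tuple R | forall i : 'I_n, tnth a i <= tnth x i < tnth a i + l]
  = \bigcap_(i in [set: 'I_n]) ((fun x => tnth x i) @^-1` `[tnth a i, tnth a i + l[).
  apply/seteqP; split => x /=.
    by move=> H i _ /=; rewrite in_itv /=; exact: H.
  by move=> H i; have := H i I; rewrite /= in_itv.
apply: fin_bigcap_measurable; first exact: finite_finset.
move=> i _; rewrite -[X in measurable X]setTI.
exact: (measurable_tnth i measurableT (measurable_itv _)).
Qed.

End aux.

Section luxlemmas.
Context {R : realType} {n : nat} (mu : {measure set (n.-tuple R) -> \bar R}).
Context (A : R -> R) (hA : young A).

Definition adm (Q : set (n.-tuple R)) (g : n.-tuple R -> R) (l : R) : Prop :=
  0 < l /\
  (((fine (mu Q))^-1)%:E * \int[mu]_(y in Q) (A (`|g y| / l))%:E <= 1)%E.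

Lemma lux_ge0 Q g : (0 <= lux mu A Q g)%E.
Proof.
apply: le_ereal_inf_tmp => _ [l [l0 _] <-]; rewrite lee_fin ltW //.
Qed.

Lemma lux_le Q g l : adm Q g l -> (lux mu A Q g <= l%:E)%E.
Proof. by move=> al; apply: ereal_inf_lbound; exists l. Qed.

Lemma lux_empty Q g : (forall l, ~ adm Q g l) -> lux mu A Q g = +oo%E.
Proof.
move=> H; rewrite /lux.
have -> : [set l%:E | l in [set l : R | 0 < l /\
      (((fine (mu Q))^-1)%:E * \int[mu]_(y in Q) (A (`|g y| / l))%:E <= 1)%E]]
   = set0 :> set (\bar R).
  by apply/seteqP; split => [x [l al lx]|//]; exact: (H l al).
exact: ereal_inf0.
Qed.

Lemma mA : measurable_fun (`[0, +oo[%classic : set R) A.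
Proof.
apply: measurable_realfun.subspace_continuous_measurable_fun; first exact: measurable_itv.
by case: hA => _ [_ [cA _]].
Qed.

Lemma mAcomp (Q : set (n.-tuple R)) (g : n.-tuple R -> R) (l : R) : measurable Q -> measurable_fun Q g -> 0 < l ->
  measurable_fun Q (fun y => A (`|g y| / l)).
Proof.
move=> mQ mg l0.
rewrite (_ : (fun y => A (`|g y| / l)) = A \o (fun y => `|g y| / l)) //.
apply: (measurable_comp (F := (`[0, +oo[%classic : set R))).
- exact: measurable_itv.
- move=> _ [y _ <-]; rewrite /= in_itv /= andbT.
  by apply: divr_ge0 => //; exact: ltW.
- exact: mA.
- apply: measurable_realfun.measurable_funM => //.
  exact: (measurableT_comp (@measurable_realfun.normr_measurable R _) mg).
Qed.

Lemma adm_comb (Q : set (n.-tuple R)) (u v w : n.-tuple R -> R) (al be ga l1 l2 : R) :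
  measurable Q -> measurable_fun Q u -> measurable_fun Q v -> measurable_fun Q w ->
  0 < al -> 0 < be -> 0 < ga ->
  (forall y, Q y -> ga * `|w y| <= al * `|u y| + be * `|v y|) ->
  adm Q u l1 -> adm Q v l2 -> adm Q w ((al * l1 + be * l2) / ga).
Proof.
move=> mQ mu' mv mw al0 be0 ga0 H [l10 h1] [l20 h2].
have [A0 [Ap [_ [Amono [Aconv _]]]]] := hA.
have s0 : 0 < al * l1 + be * l2 by rewrite addr_gt0 // mulr_gt0.
set s := al * l1 + be * l2 in s0 *.
set t := al * l1 / s.
have t0 : 0 <= t by rewrite divr_ge0 // ltW // mulr_gt0.
have t1 : t <= 1 by rewrite ler_pdivrMr // mul1r lerDl ltW // mulr_gt0.
split; first by rewrite divr_gt0.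
set c := (fine (mu Q))^-1.
have c0 : 0 <= c by rewrite invr_ge0 fine_ge0 // measure_ge0.
have mAu := @mAcomp _ _ _ mQ mu' l10.
have mAv := @mAcomp _ _ _ mQ mv l20.
have mAw := @mAcomp _ _ _ mQ mw (divr_gt0 s0 ga0).
have ptw y : Q y -> A (`|w y| / (s / ga)) <=
    t * A (`|u y| / l1) + (1 - t) * A (`|v y| / l2).
  move=> Qy; apply: le_trans; last apply: Aconv => //; last first.
  idtac.
  all: try by rewrite divr_ge0 // ltW.
  have -> : t * (`|u y| / l1) + (1 - t) * (`|v y| / l2) =
            (al * `|u y| + be * `|v y|) / s.
    rewrite /t /s; field.
    by rewrite -/s (gt_eqF s0) (gt_eqF l10) (gt_eqF l20).
  have -> : `|w y| / (s / ga) = ga * `|w y| / s.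
    by field; rewrite (gt_eqF s0) (gt_eqF ga0).
  apply: Amono; first by rewrite divr_ge0 // ?mulr_ge0 // ltW.
  by apply: ler_wpM2r; [rewrite invr_ge0 ltW | exact: H].
have Iu0 : (0 <= \int[mu]_(y in Q) (A (`|u y| / l1))%:E)%E.
  by apply: integral_ge0 => y _; rewrite lee_fin Ap // divr_ge0 // ltW.
have Iv0 : (0 <= \int[mu]_(y in Q) (A (`|v y| / l2))%:E)%E.
  by apply: integral_ge0 => y _; rewrite lee_fin Ap // divr_ge0 // ltW.
apply: (@le_trans _ _ (c%:E * \int[mu]_(y in Q)
   ((t * A (`|u y| / l1) + (1 - t) * A (`|v y| / l2))%:E))%E).
  apply: lee_wpmul2l; first by rewrite lee_fin.
  apply: ge0_le_integral => //.
  - by move=> y Qy; rewrite lee_fin Ap // divr_ge0 // ltW // divr_gt0.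
  - exact/measurable_realfun.measurable_EFinP.
  - apply/measurable_realfun.measurable_EFinP; apply: measurable_realfun.measurable_funD;
      apply: measurable_realfun.measurable_funM => //; exact: measurable_cst.
rewrite (eq_integral (fun y => (t%:E * (A (`|u y| / l1))%:E
     + (1 - t)%:E * (A (`|v y| / l2))%:E)%E)); last first.
  by move=> y _; rewrite EFinD !EFinM.
rewrite ge0_integralD //; last first.
all: try (by apply: measurable_funeM; exact/measurable_realfun.measurable_EFinP).
all: try (by move=> y Qy; rewrite mule_ge0 // lee_fin ?subr_ge0 // Ap // divr_ge0 // ltW).
rewrite !ge0_integralZl_EFin //.
all: try (by move=> y Qy; rewrite lee_fin Ap // divr_ge0 // ltW).
all: try (exact/measurable_realfun.measurable_EFinP).
all: try (by rewrite subr_ge0).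
rewrite ge0_muleDr; last 2 first.
- by rewrite mule_ge0 // lee_fin.
- by rewrite mule_ge0 // lee_fin subr_ge0.
rewrite muleCA [X in (_ + X)%E]muleCA.
apply: (@le_trans _ _ (t%:E * 1 + (1 - t)%:E * 1)%E).
  by apply: leeD; apply: lee_wpmul2l => //; rewrite lee_fin ?subr_ge0.
by rewrite !mule1 -EFinD addrC subrK.
Qed.


Arguments adm_comb {Q u v w al be ga l1 l2}.

Lemma lux_comb (Q : set (n.-tuple R)) (u v w : n.-tuple R -> R) (al be ga : R) :
  measurable Q -> measurable_fun Q u -> measurable_fun Q v -> measurable_fun Q w ->
  0 < al -> 0 < be -> 0 < ga ->
  (forall y, Q y -> ga * `|w y| <= al * `|u y| + be * `|v y|) ->
  (ga%:E * lux mu A Q w <= al%:E * lux mu A Q u + be%:E * lux mu A Q v)%E.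
Proof.
move=> mQ mu' mv mw al0 be0 ga0 H.
have nNy (k : R) g : 0 < k -> (k%:E * lux mu A Q g != -oo)%E.
  move=> k0; rewrite gt_eqF // (lt_le_trans (ltNyr 0%R)) //.
  by apply: mule_ge0; [rewrite lee_fin ltW | exact: lux_ge0].
have [[l1 a1]|nu] := pselect (exists l, adm Q u l); last first.
  rewrite (@lux_empty Q u); last by move=> l al1; apply: nu; exists l.
  by rewrite gt0_muley ?lte_fin // addye ?leey // nNy.
have [[l2 a2]|nv] := pselect (exists l, adm Q v l); last first.
  rewrite (@lux_empty Q v); last by move=> l al1; apply: nv; exists l.
  by rewrite gt0_muley ?lte_fin // addey ?leey // nNy.
have fu : lux mu A Q u \is a fin_num.
  by rewrite ge0_fin_numE ?lux_ge0 // (le_lt_trans (@lux_le _ _ _ a1)) ?ltry.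
have fv : lux mu A Q v \is a fin_num.
  by rewrite ge0_fin_numE ?lux_ge0 // (le_lt_trans (@lux_le _ _ _ a2)) ?ltry.
have fw : lux mu A Q w \is a fin_num.
  rewrite ge0_fin_numE ?lux_ge0 //.
  by rewrite (le_lt_trans (@lux_le _ _ _ (adm_comb mQ mu' mv mw al0 be0 ga0 H a1 a2))) ?ltry.
apply/lee_addgt0Pr => e e0.
have abe : 0 < al + be by rewrite addr_gt0.
have d0 : 0 < e / (al + be) by rewrite divr_gt0.
have [x1 [l1' a1' <-] lt1] := lb_ereal_inf_adherent d0 fu.
have [x2 [l2' a2' <-] lt2] := lb_ereal_inf_adherent d0 fv.
have lw := @lux_le _ _ _ (adm_comb mQ mu' mv mw al0 be0 ga0 H a1' a2').
rewrite -/(lux mu A Q u) -(fineK fu) -EFinD lte_fin in lt1.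
rewrite -/(lux mu A Q v) -(fineK fv) -EFinD lte_fin in lt2.
rewrite -(fineK fw) lee_fin ler_pdivlMr // in lw.
rewrite -(fineK fu) -(fineK fv) -(fineK fw) -!EFinM -!EFinD lee_fin.
set U := fine (lux mu A Q u) in lt1 *.
set V := fine (lux mu A Q v) in lt2 *.
set W := fine (lux mu A Q w) in lw *.
have h1 : al * l1' <= al * (U + e / (al + be)) by rewrite ler_wpM2l // ?ltW.
have h2 : be * l2' <= be * (V + e / (al + be)) by rewrite ler_wpM2l // ?ltW.
have h3 : al * (U + e / (al + be)) + be * (V + e / (al + be)) = al * U + be * V + e.
  by field; rewrite gt_eqF.
have h4 : ga * W = W * ga by rewrite mulrC.
lra.
Qed.

End luxlemmas.

Lemma key_ineq {R : realType} (a G : R) (m h : nat) : 0 <= a -> 0 <= G -> (h <= m)%N ->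
  a ^+ (m - h) * G ^+ h <= a ^+ m + G ^+ m.
Proof.
move=> a0 G0 hm.
have em : (m = (m - h) + h)%N by rewrite subnK.
case: (leP G a) => Ga.
  apply: (@le_trans _ _ (a ^+ m)); last by rewrite lerDl exprn_ge0.
  rewrite [X in _ <= a ^+ X]em exprD ler_wpM2l ?exprn_ge0 //.
  by apply: lerXn2r => //; rewrite nnegrE.
apply: (@le_trans _ _ (G ^+ m)); last by rewrite lerDr exprn_ge0.
rewrite [X in _ <= G ^+ X]em exprD ler_wpM2r ?exprn_ge0 //.
by apply: lerXn2r => //; rewrite ?nnegrE // ltW.
Qed.

Theorem lemma3p8 (R : realType) (n : nat)
  (mu : {measure set (n.-tuple R) -> \bar R}) (hmu : lebesgue_on_boxes mu)
  (eta : R) (S : set (set (n.-tuple R))) (hS : sparse mu eta S)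
  (m h : nat) (hm : (0 < m)%N) (hh : (h <= m)%N)
  (A : R -> R) (hA : young A)
  (b f : n.-tuple R -> R) (hb : Lloc mu m b) (hf : measurable_fun setT f)
  (x : n.-tuple R) :
  (\esum_(Q in S)
      ((`|b x - avg mu Q b| ^+ (m - h))%R%:E
       * lux mu A Q (fun y => (f y * `|b y - avg mu Q b| ^+ h)%R)
       * (\1_Q x)%:E)
   <= \esum_(Q in S)
        ((`|b x - avg mu Q b| ^+ m)%R%:E * lux mu A Q f * (\1_Q x)%:E)
    + \esum_(Q in S)
        (lux mu A Q (fun y => (f y * `|b y - avg mu Q b| ^+ m)%R) * (\1_Q x)%:E))%E.
Proof.
have [_ [cubeS _]] := hS.
have [mb _] := hb.
have ind0 Q : (0 <= (\1_Q x : R)%:E)%E by rewrite lee_fin indicE.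
rewrite -esumD; last 2 first.
- by move=> Q _; apply: mule_ge0; [apply: mule_ge0; [rewrite lee_fin exprn_ge0|exact: lux_ge0]|].
- by move=> Q _; apply: mule_ge0; [exact: lux_ge0|].
apply: le_esum => Q SQ.
have mQ := @cube_measurable _ _ Q (cubeS Q SQ).
set c := avg mu Q b.
have mg k : measurable_fun Q (fun y => f y * `|b y - c| ^+ k).
  apply: measurable_realfun.measurable_funM; first exact: measurable_funTS.
  apply: measurable_realfun.measurable_funX.
  apply: (measurableT_comp (@measurable_realfun.normr_measurable R _)).
  apply: measurable_realfun.measurable_funB; last exact: measurable_cst.
  exact: measurable_funTS.
rewrite indicE; case: (boolP (x \in Q)) => xQ /=; last by rewrite !mule0 adde0.
rewrite !mule1.
have := normr_ge0 (b x - c); rewrite le_eqVlt => /orP [/eqP a0 | apos].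
  rewrite -a0; case: (ltnP h m) => hm'.
    rewrite expr0n /= (_ : (m - h == 0)%N = false); last by apply/negbTE; rewrite subn_eq0 -ltnNge.
    rewrite mul0e; apply: adde_ge0; last exact: lux_ge0.
    by apply: mule_ge0; [rewrite lee_fin exprn_ge0|exact: lux_ge0].
  have hmm : h = m by apply/eqP; rewrite eqn_leq hh hm'.
  rewrite hmm subnn expr0 mul1e; apply: lee_paddl; last by [].
  by apply: mule_ge0; [rewrite lee_fin exprn_ge0|exact: lux_ge0].
have := @lux_comb R n mu A hA Q f (fun y => f y * `|b y - c| ^+ m)
  (fun y => f y * `|b y - c| ^+ h) (`|b x - c| ^+ m) 1 (`|b x - c| ^+ (m - h))
  mQ (measurable_funTS hf) (mg m) (mg h) (exprn_gt0 _ apos) ltr01 (exprn_gt0 _ apos).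
rewrite mul1e; apply.
move=> y Qy; rewrite !normrM !normrX !normr_id mul1r.
have := @key_ineq R _ _ m h (normr_ge0 (b x - c)) (normr_ge0 (b y - c)) hh.
move=> K.
rewrite mulrCA [X in _ <= _ + X]mulrC.
by rewrite -mulrDl mulrC ler_wpM2r.
Qed.
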